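(* Let $A:\Omega^+\to\mathbb{R}$ be Lipschitz, $W$ a Lipschitz involution kernel for $A$ with associated $A^-:\Omega^-\to\mathbb{R}$. Let $\mu$ be any equilibrium probability on $\Omega^+$, $\hat\mu$ its unique $\hat\sigma$-invariant extension to $\hat\Omega$ and $\mu^-$ the marginal of $\hat\mu$ on $\Omega^-$. Then \[(1)\ \int A\,d\mu=\int A^-\,d\mu^-,\qquad (2)\ \int A^-\circ\theta^{-1}\,d\mu=\int A\circ\theta\,d\mu^-.\]
   Context: $(M,d)$ is a compact metric space; $\Omega^+=M^{\mathbb{N}}$ with points $x=|x_1,x_2,\dots)$, $\Omega^-=M^{\mathbb{N}}$ with points $y=(\dots,y_2,y_1|$; $\hat\Omega=\Omega^-\times\Omega^+$ with $\hat\sigma(\dots,y_2,y_1|x_1,x_2,\dots)=(\dots,y_2,y_1,x_1|x_2,\dots)$. $\theta:\Omega^-\to\Omega^+$, $\theta(\dots,z_2,z_1|)=|z_1,z_2,\dots)$. A shift-invariant probability $\mu$ on $\Omega^+$ is an equilibrium probability if there exist a Borel probability $\nu$ on $M$ with $\operatorname{supp}\nu=M$ and a Lipschitz $B:\Omega^+\to\mathbb{R}$ with $\int e^{B(|a,x_1,x_2,\dots))}d\nu(a)=1$ for all $x$ such that $\int\!\int e^{B(|a,x))}f(|a,x))\,d\nu(a)\,d\mu(x)=\int f\,d\mu$ for all continuous $f$. Its $\hat\sigma$-invariant extension is the unique $\hat\sigma$-invariant probability on $\hat\Omega$ with marginal $\mu$ on $\Omega^+$. A Lipschitz $W:\hat\Omega\to\mathbb{R}$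 is an involution kernel for $A$ if $A^-:=A\circ\hat\sigma^{-1}+W\circ\hat\sigma^{-1}-W$ does not depend on $x$, i.e. $A^-(y)=A(|y_1,x_1,x_2,\dots))+W(\dots,y_3,y_2|y_1,x_1,\dots)-W(\dots,y_2,y_1|x_1,\dots)$; $A^-$ is viewed as a function on $\Omega^-$. *)

(* Defs.v *)
From HB Require Import structures.
From mathcomp Require Import all_boot all_order all_algebra.
From mathcomp Require Import all_classical all_reals all_analysis.
Set Implicit Arguments. Unset Strict Implicit. Unset Printing Implicit Defensive.
Import Order.TTheory GRing.Theory Num.Theory.
Local Open Scope classical_set_scope.
Local Open Scope ring_scope.

Section Defs.
Variables (R : realType) (M : pointedType) (d : M -> M -> R).

Definition is_metric (T : Type) (dist : T -> T -> R) : Prop :=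
  [/\ forall x y, 0 <= dist x y,
      forall x y, dist x y = 0 <-> x = y,
      forall x y, dist x y = dist y x &
      forall x y z, dist x z <= dist x y + dist y z].

Definition seq_compact : Prop :=
  forall u : nat -> M, exists phi : nat -> nat,
    (forall n, (phi n < phi n.+1)%N) /\
    exists l : M, (fun n => d (u (phi n)) l) @ \oo --> 0.

Definition dopen (T : Type) (dist : T -> T -> R) : set (set T) :=
  fun U => forall x, U x -> exists2 e : R, 0 < e & forall y, dist x y < e -> U y.

Definition dball (T : Type) (dist : T -> T -> R) (x : T) (e : R) : set T :=
  fun y => dist x y < e.

(* sequences x = |x_1,x_2,...) are encoded as x : nat -> M with x_{n+1} = x n;
   likewise y = (...,y_2,y_1| is encoded as y : nat -> M with y_{n+1} = y n. *)
Definition seqdist (x y : nat -> M) : R :=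
  limn (fun N => \sum_(0 <= n < N) (d (x n) (y n) / 2 ^+ n.+1)).

Definition OmegaP := g_sigma_algebraType (dopen seqdist).
Definition OmegaM := g_sigma_algebraType (dopen seqdist).
Definition MB := g_sigma_algebraType (dopen d).

Definition OmegaHat := (OmegaM * OmegaP)%type.

Definition hatdist (p q : OmegaHat) : R := seqdist p.1 q.1 + seqdist p.2 q.2.

Definition scons (a : M) (x : nat -> M) : nat -> M :=
  fun n => if n is k.+1 then x k else a.
Definition stail (x : nat -> M) : nat -> M := fun n => x n.+1.

Definition sigmaP (x : OmegaP) : OmegaP := stail x.

(* hat sigma (..,y2,y1|x1,x2,..) = (..,y2,y1,x1|x2,..) *)
Definition sigmaHat (p : OmegaHat) : OmegaHat := (scons (p.2 0%N) p.1, stail p.2).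
(* its inverse (..,y2,y1|x1,..) = (..,y3,y2|y1,x1,..) *)
Definition sigmaHatInv (p : OmegaHat) : OmegaHat := (stail p.1, scons (p.1 0%N) p.2).

(* theta (..,z2,z1|) = |z1,z2,..) : identity on the encodings *)
Definition theta (y : OmegaM) : OmegaP := y.
Definition thetaInv (x : OmegaP) : OmegaM := x.

Definition dlipschitz (T : Type) (dist : T -> T -> R) (f : T -> R) : Prop :=
  exists K : R, forall x y, `|f x - f y| <= K * dist x y.

Definition dcontinuous (T : Type) (dist : T -> T -> R) (f : T -> R) : Prop :=
  forall x (e : R), 0 < e -> exists2 delta : R, 0 < delta &
    forall y, dist x y < delta -> `|f x - f y| < e.

Definition shift_invariant (mu : probability OmegaP R) : Prop :=
  forall B : set OmegaP, measurable B -> mu (sigmaP @^-1` B) = mu B.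

Definition full_support (nu : probability MB R) : Prop :=
  forall (x : MB) (e : R), 0 < e -> (0 < nu (dball d x e))%E.

Definition equilibrium (mu : probability OmegaP R) : Prop :=
  shift_invariant mu /\
  exists (nu : probability MB R) (B : OmegaP -> R),
    [/\ full_support nu, dlipschitz seqdist B,
        (forall x : OmegaP, (\int[nu]_a (expR (B (scons a x)))%:E = 1)%E) &
        forall f : OmegaP -> R, dcontinuous seqdist f ->
          (\int[mu]_x (\int[nu]_a ((expR (B (scons a x)) * f (scons a x))%:E))
          = \int[mu]_x (f x)%:E)%E].

Definition involution_kernel (A : OmegaP -> R) (W : OmegaHat -> R)
    (Am : OmegaM -> R) : Prop :=
  forall (y : OmegaM) (x : OmegaP),
    Am y = A (scons (y 0%N) x) + W (stail y, scons (y 0%N) x) - W (y, x).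

Definition hat_invariant (muh : probability OmegaHat R) : Prop :=
  forall E : set OmegaHat, measurable E -> muh (sigmaHat @^-1` E) = muh E.

Definition marginalP (muh : probability OmegaHat R) (mu : probability OmegaP R) :=
  forall B : set OmegaP, measurable B -> muh (setT `*` B) = mu B.

Definition marginalM (muh : probability OmegaHat R) (mum : probability OmegaM R) :=
  forall B : set OmegaM, measurable B -> muh (B `*` setT) = mum B.

End Defs.

(* Main.v *)
Require Import Defs.
From HB Require Import structures.
From mathcomp Require Import all_boot all_order all_algebra.
From mathcomp Require Import all_classical all_reals all_analysis.
From mathcomp Require Import ring lra measurable_realfun.
Import Order.TTheory GRing.Theory Num.Theory numFieldNormedType.Exports.
Local Open Scope classical_set_scope.
Local Open Scope ring_scope.

Lemma geo (R : realType) m N : (m <= N)%N ->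
  \sum_(m <= n < N) (1 / 2 ^+ n.+1 : R) = 1 / 2 ^+ m - 1 / 2 ^+ N.
Proof.
elim: N => [|N IH]; first by rewrite leqn0 => /eqP ->; rewrite big_geq // subrr.
rewrite leq_eqVlt => /orP[/eqP ->|]; first by rewrite big_geq // subrr.
rewrite ltnS => HmN.
have -> : \sum_(m <= n < N.+1) (1 / 2 ^+ n.+1 : R) =
   \sum_(m <= n < N) (1 / 2 ^+ n.+1) + 1 / 2 ^+ N.+1.
  by rewrite big_nat_recr.
rewrite (IH HmN) exprS.
have h2 : (2 : R) ^+ N != 0 by rewrite expf_neq0.
rewrite !mul1r invfM; set u := (2 ^+ N)^-1.
have -> : (2:R)^-1 * u = u / 2 by rewrite mulrC.
lra.
Qed.

Lemma pow2_big (R : realType) (C : R) : exists k, C < 2 ^+ k.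
Proof.
exists (Num.truncn C).+1.
apply: (lt_le_trans (Num.Theory.truncnS_gt C)).
rewrite -natrX ler_nat; apply: ltnW; exact: ltn_expl.
Qed.
Lemma bigcup_count_meas (T : countType) dd (X : measurableType dd) (F : T -> set X) (P : set T) :
  (forall t, P t -> measurable (F t)) -> measurable (\bigcup_(t in P) F t).
Proof.
move=> HF.
have -> : \bigcup_(t in P) F t = \bigcup_(n in [set n : nat | if unpickle n is Some t then P t else False])
   (if unpickle n is Some t then F t else set0).
  apply/seteqP; split => x /=.
    by case=> t Pt Ft; exists (pickle t); rewrite /= pickleK.
  by case=> n /=; case: (unpickle n) => // t Pt Ft; exists t.
apply: bigcup_measurable => n /=; case: (unpickle n) => // t; exact: HF.
Qed.

Section Basics.
Variables (R : realType) (M : pointedType) (d : M -> M -> R).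
Hypothesis dm : is_metric d.
Variable Db : R.
Hypothesis Hb : forall a b, d a b <= Db.

Lemma d_ge0 a b : 0 <= d a b. Proof. by case: dm. Qed.
Lemma d_sym a b : d a b = d b a. Proof. by case: dm. Qed.
Lemma d_tri a b c : d a c <= d a b + d b c. Proof. by case: dm. Qed.
Lemma d_self a : d a a = 0. Proof. by case: dm => _ h _ _; apply/h. Qed.

Lemma Db_ge0 : 0 <= Db.
Proof. exact: le_trans (d_ge0 point point) (Hb _ _). Qed.

Definition PS (x y : nat -> M) (N : nat) : R :=
  \sum_(0 <= n < N) (d (x n) (y n) / 2 ^+ n.+1).

Lemma pow2_gt0 n : (0 : R) < 2 ^+ n. Proof. by rewrite exprn_gt0. Qed.

Lemma term_ge0 x y n : 0 <= d (x n) (y n) / 2 ^+ n.+1.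
Proof. by rewrite divr_ge0 // ?d_ge0 // ltW // pow2_gt0. Qed.

Lemma S_nd x y : nondecreasing_seq (PS x y).
Proof.
apply/nondecreasing_seqP => n; rewrite /PS.
have -> : \sum_(0 <= i < n.+1) (d (x i) (y i) / 2 ^+ i.+1) =
  \sum_(0 <= i < n) (d (x i) (y i) / 2 ^+ i.+1) + d (x n) (y n) / 2 ^+ n.+1.
  by rewrite big_nat_recr.
by rewrite lerDl term_ge0.
Qed.

Lemma S_ge0 x y N : 0 <= PS x y N.
Proof. by rewrite /PS; apply: sumr_ge0 => i _; exact: term_ge0. Qed.

Lemma S_le_bound x y e k N : 0 <= e ->
  (forall j, (j < k)%N -> d (x j) (y j) <= e) -> PS x y N <= e + Db / 2 ^+ k.
Proof.
move=> e0 He.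
apply: (@le_trans _ _ (PS x y (maxn N k))); first by apply: S_nd; exact: leq_maxl.
rewrite /PS (@big_cat_nat _ _ _ k) //= ?leq_maxr //.
apply: lerD.
  apply: (@le_trans _ _ (\sum_(0 <= n < k) (e * (1 / 2 ^+ n.+1)))).
    apply: ler_sum_nat => i /andP[_ ik]; rewrite mul1r.
    by rewrite ler_wpM2r ?He // invr_ge0 ltW // pow2_gt0.
  rewrite -mulr_sumr geo // expr0 div1r invr1.
  rewrite -[X in _ <= X]mulr1; apply: ler_pM => //.
    by rewrite subr_ge0 mul1r invf_le1 ?pow2_gt0 // exprn_ege1 // ler1n.
apply: (@le_trans _ _ (\sum_(k <= n < maxn N k) (Db * (1 / 2 ^+ n.+1)))).
  apply: ler_sum_nat => i _; rewrite mul1r.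
  by rewrite ler_wpM2r ?Hb // invr_ge0 ltW // pow2_gt0.
rewrite -mulr_sumr geo ?leq_maxr // mul1r ler_pM //; first exact: Db_ge0.
  by rewrite subr_ge0 mul1r lef_pV2 ?posrE ?pow2_gt0 // ler_eXn2l ?ltr1n // leq_maxr.
by rewrite gerBl mul1r invr_ge0 ltW // pow2_gt0.
Qed.

Lemma cvgS x y : cvgn (PS x y).
Proof.
apply: nondecreasing_is_cvgn; first exact: S_nd.
exists (0 + Db / 2 ^+ 0) => _ [N _ <-]; apply: S_le_bound => // j.
Qed.

Lemma S_le_seqdist x y N : PS x y N <= seqdist d x y.
Proof. exact: (nondecreasing_cvgn_le (S_nd x y) (cvgS x y)). Qed.

Lemma seqdist_le x y B : (forall N, PS x y N <= B) -> seqdist d x y <= B.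
Proof.
move=> HB; apply: (limr_le (cvgS x y)).
by near=> N; exact: HB.
Unshelve. all: by end_near.
Qed.

Lemma seqdist_ge0 x y : 0 <= seqdist d x y.
Proof. exact: le_trans (S_ge0 x y 0) (S_le_seqdist _ _ _). Qed.

Lemma seqdist_cyl x y e k : 0 <= e ->
  (forall j, (j < k)%N -> d (x j) (y j) <= e) -> seqdist d x y <= e + Db / 2 ^+ k.
Proof. by move=> e0 He; apply: seqdist_le => N; exact: S_le_bound. Qed.

Lemma seqdist_bound x y : seqdist d x y <= Db.
Proof.
have := @seqdist_cyl x y 0 0 (lexx _) (fun j (h : (j < 0)%N) => match (notF h) with end).
by rewrite add0r expr0 divr1.
Qed.

Lemma seqdist_self x : seqdist d x x = 0.
Proof.
apply/eqP; rewrite eq_le seqdist_ge0 andbT; apply: seqdist_le => N.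
by rewrite /PS big1 // => i _; rewrite d_self mul0r.
Qed.

Lemma coord_le x y j : d (x j) (y j) <= 2 ^+ j.+1 * seqdist d x y.
Proof.
rewrite -ler_pdivrMl ?pow2_gt0 // mulrC.
apply: le_trans (S_le_seqdist x y j.+1).
rewrite /PS.
have -> : \sum_(0 <= i < j.+1) (d (x i) (y i) / 2 ^+ i.+1) =
  \sum_(0 <= i < j) (d (x i) (y i) / 2 ^+ i.+1) + d (x j) (y j) / 2 ^+ j.+1.
  by rewrite big_nat_recr.
by rewrite lerDr; apply: sumr_ge0 => i _; exact: term_ge0.
Qed.

Lemma seqdist_scons a b x y :
  seqdist d (scons a x) (scons b y) <= d a b + seqdist d x y.
Proof.
apply: seqdist_le => -[|N].
  by rewrite /PS big_geq // addr_ge0 ?d_ge0 ?seqdist_ge0.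
rewrite /PS big_nat_recl //=.
apply: lerD.
  by rewrite ler_pdivrMr ?pow2_gt0 // ler_peMr ?d_ge0 // expr1 ler1n.
apply: le_trans (S_le_seqdist x y N); rewrite /PS ler_sum_nat // => i _.
by rewrite ler_wpM2l ?d_ge0 // lef_pV2 ?posrE ?pow2_gt0 // ler_eXn2l ?ltr1n.
Qed.

Lemma seqdist_stail x y :
  seqdist d (stail x) (stail y) <= 2 * seqdist d x y.
Proof.
apply: seqdist_le => N.
apply: (@le_trans _ _ (2 * PS x y N.+1)); last first.
  by rewrite ler_pM2l // S_le_seqdist.
rewrite /PS big_nat_recl //= mulrDr -[X in X <= _]add0r; apply: lerD.
  by rewrite mulr_ge0 // term_ge0.
rewrite mulr_sumr ler_sum_nat // => i _.
rewrite le_eqVlt; apply/orP; left; apply/eqP; rewrite /stail (exprS _ i.+1); field; by rewrite ?expf_neq0 // pnatr_eq0.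
Qed.
Hypothesis dc : seq_compact d.

Lemma net r : 0 < r -> exists N (s : nat -> M),
  forall a, exists i, (i < N)%N /\ d a (s i) < r.
Proof.
move=> r0; apply: contrapT => H.
have H' : forall N (s : nat -> M), exists a, forall i, (i < N)%N -> r <= d a (s i).
  move=> N s; apply: contrapT => nH; apply: H; exists N, s => a.
  apply: contrapT => na; apply: nH; exists a => i iN.
  rewrite leNgt; apply/negP => lt; apply: na; by exists i.
have H2 : forall N, exists g : (nat -> M) -> M, forall s i, (i < N)%N -> r <= d (g s) (s i).
  by move=> N; have [g Hg] := choice (H' N); exists g.
have [f Hf] := choice H2.
pose g := fix g n := if n is n'.+1 then (fun i => if (i < n')%N then g n' i else f n' (g n'))
                     else (fun _ => point : M).
have gS : forall n i, (i < n)%N -> g n.+1 i = g n i by move=> n i /= ->.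
have gst : forall m n i, (i < n)%N -> g (n + m)%N i = g n i.
  elim=> [|m IH] n i lt; first by rewrite addn0.
  by rewrite addnS gS ?IH // (leq_trans lt) // leq_addr.
pose u n := g n.+1 n.
have usep : forall n i, (i < n)%N -> r <= d (u n) (u i).
  move=> n i lt; have -> : u i = g n i.
    by rewrite /u -(subnKC lt) gst.
  by rewrite /u /= ltnn; exact: Hf.
have [phi [phim [l Hl]]] := dc u.
have r2 : 0 < r / 2 by rewrite divr_gt0.
have := cvgr_dist_lt _ _ Hl _ r2.
case => N _ HN.
have h1 := HN N (leqnn N); have h2 := HN N.+1 (leqnSn N).
rewrite /= sub0r normrN ger0_norm ?d_ge0 // in h1.
rewrite /= sub0r normrN ger0_norm ?d_ge0 // in h2.
have hlt : d (u (phi N.+1)) (u (phi N)) < r.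
  apply: (@le_lt_trans _ _ (d (u (phi N.+1)) l + d l (u (phi N)))); first exact: d_tri.
  rewrite (d_sym l).
  have -> : r = r / 2 + r / 2 by rewrite -splitr.
  exact: ltrD.
by move: (usep _ _ (phim N)); rewrite leNgt hlt.
Qed.

Lemma d_bounded : exists Db, forall a b, d a b <= Db.
Proof.
have [N [s Hs]] := @net 1 ltr01.
exists (2 + \sum_(i < N) \sum_(j < N) d (s i) (s j)) => a b.
have [i [iN ai]] := Hs a; have [j [jN bj]] := Hs b.
apply: (le_trans (d_tri a (s i) b)).
apply: (le_trans (lerD (lexx _) (d_tri (s i) (s j) b))).
rewrite (d_sym (s j) b).
have hij : d (s i) (s j) <= \sum_(i < N) \sum_(j < N) d (s i) (s j).
  rewrite (bigD1 (Ordinal iN)) //= (bigD1 (Ordinal jN)) //=.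
  rewrite -addrA lerDl addr_ge0 //; apply: sumr_ge0 => k _;
    try apply: sumr_ge0 => k' _; exact: d_ge0.
have : d a (s i) + d b (s j) <= 2 by rewrite -[2]/(1 + 1 : R); apply: lerD; exact: ltW.
move: hij; lra.
Qed.
Lemma hatdist_ge0 (p q : OmegaHat d) : 0 <= hatdist p q.
Proof. by rewrite /hatdist addr_ge0 // seqdist_ge0. Qed.

Lemma coord_open j c r : dopen (seqdist d) [set x : nat -> M | d (x j) c < r].
Proof.
move=> x /= hx; exists ((r - d (x j) c) / 2 ^+ j.+1).
  by rewrite divr_gt0 ?pow2_gt0 // subr_gt0.
move=> y hy.
apply: (le_lt_trans (d_tri _ (x j) _)); rewrite d_sym.
have h := coord_le x y j; rewrite mulrC in h.
rewrite ltr_pdivlMr ?pow2_gt0 // in hy.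
lra.
Qed.

Lemma open_measP (U : set (OmegaP d)) : dopen (seqdist d) U -> measurable U.
Proof. by move=> hU; apply: sub_sigma_algebra. Qed.

Lemma lip_meas dd (T : measurableType dd) (dl : T -> T -> R)
  (hdl : forall x y, 0 <= dl x y)
  (hopen : forall U : set T, dopen dl U -> measurable U) (f : T -> R) :
  dlipschitz dl f -> measurable_fun setT f.
Proof.
move=> [K HK]; apply: (measurability _ (RGenOpens.measurableE R)).
move=> _ [_ [a [b ->]] <-]; rewrite setTI; apply: hopen => x /=.
rewrite in_itv /= => /andP[ax xb].
set m := Order.min (f x - a) (b - f x).
have m0 : 0 < m by rewrite /m lt_min !subr_gt0 ax xb.
have ma : m <= f x - a by rewrite /m ge_min lexx.
have mb : m <= b - f x by rewrite /m ge_min lexx orbT.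
have K1 : 0 < `|K| + 1 by rewrite ltr_pwDr // normr_ge0.
exists (m / (`|K| + 1)); first by rewrite divr_gt0.
move=> y hy; rewrite in_itv /=.
have h1 := HK x y.
have h2 : K * dl x y <= `|K| * dl x y by rewrite ler_wpM2r // ?hdl // ler_norm.
have h3 : `|K| * dl x y < m.
  rewrite ltr_pdivlMr // in hy.
  by apply: (le_lt_trans _ hy); rewrite mulrDr mulr1 mulrC lerDl hdl.
have h4 := ler_norm (f x - f y).
have h5 : - (f x - f y) <= `|f x - f y| by rewrite -normrN ler_norm.
apply/andP; split; lra.
Qed.

Lemma lip_meas_to dd (T : measurableType dd) (dl : T -> T -> R)
  (hdl : forall x y, 0 <= dl x y)
  (hopen : forall U : set T, dopen dl U -> measurable U) (f : T -> OmegaP d) :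
  (exists K, forall p q, seqdist d (f p) (f q) <= K * dl p q) -> measurable_fun setT f.
Proof.
move=> [K HK]; apply: (@measurability _ _ T (OmegaP d) setT f (dopen (seqdist d))) => //.
move=> _ [U hU <-]; rewrite setTI; apply: hopen => x /= hx.
have [e e0 He] := hU _ hx.
have K1 : 0 < `|K| + 1 by rewrite ltr_pwDr // normr_ge0.
exists (e / (`|K| + 1)); first by rewrite divr_gt0.
move=> y hy; apply: He.
apply: (le_lt_trans (HK x y)).
have h2 : K * dl x y <= `|K| * dl x y by rewrite ler_wpM2r // ?hdl // ler_norm.
apply: (le_lt_trans h2).
rewrite ltr_pdivlMr // in hy.
by apply: (le_lt_trans _ hy); rewrite mulrDr mulr1 mulrC lerDl hdl.
Qed.
Lemma net' r : 0 < r -> exists s : nat -> M, forall a, exists i, d a (s i) < r.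
Proof.
move=> r0; have [N [s Hs]] := @net r r0; exists s => a.
by have [i [_ h]] := Hs a; exists i.
Qed.

Lemma hat_open_meas (U : set (OmegaHat d)) : dopen (@hatdist _ _ d) U -> measurable U.
Proof.
move=> hU.
have H : forall k, exists s : nat -> M, forall a, exists i, d a (s i) < 1 / 2 ^+ k.
  by move=> k; apply: net'; rewrite divr_gt0 // pow2_gt0.
have [sk Hsk] := choice H.
have H2 : forall k, exists c : M -> nat, forall a, d a (sk k (c a)) < 1 / 2 ^+ k.
  by move=> k; have [c Hc] := choice (Hsk k); exists c.
have [ch Hch] := choice H2.
pose Cyl k (t : seq nat) : set (nat -> M) := \bigcap_(j in [set j | (j < k)%N])
   [set x : nat -> M | d (x j) (sk k (nth 0%N t j)) < 1 / 2 ^+ k].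
have mCyl : forall k t, measurable (Cyl k t : set (OmegaP d)).
  move=> k t; apply: bigcap_measurableType => j _; apply: open_measP; exact: coord_open.
pose F (c : nat * (seq nat * seq nat)) : set (OmegaHat d) :=
  (Cyl c.1 c.2.1 : set (OmegaM d)) `*` (Cyl c.1 c.2.2 : set (OmegaP d)).
have -> : U = \bigcup_(c in [set c | F c `<=` U]) F c.
  apply/seteqP; split; last by move=> p [c /= hc Fp]; exact: hc.
  move=> p Up; have [e e0 He] := hU p Up.
  have [k hk] := @pow2_big R ((4 + 2 * Db) / e).
  pose t1 := [seq ch k (p.1 j) | j <- iota 0 k].
  pose t2 := [seq ch k (p.2 j) | j <- iota 0 k].
  have nt : forall (x : nat -> M) j, (j < k)%N ->
     nth 0%N [seq ch k (x j) | j <- iota 0 k] j = ch k (x j).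
    by move=> x j jk; rewrite (nth_map 0%N) ?size_iota // nth_iota.
  have cyl_le : forall (x y : nat -> M),
     Cyl k [seq ch k (x j) | j <- iota 0 k] y ->
     seqdist d x y <= 2 / 2 ^+ k + Db / 2 ^+ k.
    move=> x y hy; apply: seqdist_cyl.
      by rewrite divr_ge0 // ltW // pow2_gt0.
    move=> j jk; have := hy j jk; rewrite /= nt // => h1.
    have h2 := Hch k (x j).
    apply: (le_trans (d_tri _ (sk k (ch k (x j))) _)).
    rewrite (d_sym _ (y j)).
    have -> : (2 : R) / 2 ^+ k = 1 / 2 ^+ k + 1 / 2 ^+ k.
      by rewrite -mulrDl.
    by apply: lerD; apply: ltW.
  exists (k, (t1, t2)) => /=; last first.
    by split => j /= jk; rewrite nt //; exact: Hch.
  move=> q [/= q1 q2]; apply: He.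
  have h1 := cyl_le _ _ q1; have h2 := cyl_le _ _ q2.
  rewrite /hatdist.
  have P0 := pow2_gt0 k.
  rewrite ltr_pdivrMr // in hk.
  have hk' : (4 + 2 * Db) / 2 ^+ k < e by rewrite ltr_pdivrMr // (mulrC e).
  move: h1 h2 hk'; rewrite !mulrDl !mul1r.
  set w := (2 ^+ k)^-1; set D := Db * w.
  lra.
apply: bigcup_count_meas => c _; apply: measurableX; exact: mCyl.
Qed.
Lemma lipP (T : Type) (dl : T -> T -> R) (hdl : forall x y, 0 <= dl x y) (f : T -> R) :
  dlipschitz dl f -> exists2 K, 0 <= K & forall x y, `|f x - f y| <= K * dl x y.
Proof.
move=> [K HK]; exists `|K| => // x y.
by apply: (le_trans (HK x y)); rewrite ler_wpM2r ?hdl // ler_norm.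
Qed.

Lemma lip_bnd (T : Type) (dl : T -> T -> R) (Bd : R) (hdl : forall x y, 0 <= dl x y)
  (hB : forall x y, dl x y <= Bd) (t0 : T) (f : T -> R) :
  dlipschitz dl f -> exists B, forall x, `|f x| <= B.
Proof.
move=> /(@lipP T dl hdl f) [K K0 HK]; exists (`|f t0| + K * Bd) => x.
have := ler_normD (f x - f t0) (f t0); rewrite subrK => h1.
have h2 := HK x t0.
have h3 : K * dl x t0 <= K * Bd by rewrite ler_wpM2l.
lra.
Qed.

Lemma bnd_int dd (T : measurableType dd) (P : probability T R) (f : T -> R) :
  measurable_fun setT f -> (exists B, forall x, `|f x| <= B) ->
  P.-integrable setT (EFin \o f).
Proof.
move=> mf [B HB]; apply: measurable_bounded_integrable => //.
  by apply: (le_lt_trans (probability_le1 P measurableT)); rewrite ltry.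
exists B; split; first exact: num_real.
by move=> M' BM x _; apply: le_trans (HB x) (ltW BM).
Qed.

Lemma intD dd (T : measurableType dd) (P : probability T R) (f g : T -> R) :
  measurable_fun setT f -> (exists B, forall x, `|f x| <= B) ->
  measurable_fun setT g -> (exists B, forall x, `|g x| <= B) ->
  (\int[P]_x (f x + g x)%:E = \int[P]_x (f x)%:E + \int[P]_x (g x)%:E)%E.
Proof.
move=> mf bf mg bg.
rewrite (eq_integral (fun x => (f x)%:E + (g x)%:E)%E); last by move=> x _; rewrite EFinD.
by rewrite integralD //; apply: bnd_int.
Qed.

Lemma push_int dd1 dd2 (X : measurableType dd1) (Y : measurableType dd2)
  (P : probability X R) (Q : probability Y R) (phi : X -> Y)
  (mphi : measurable_fun setT phi)
  (hPQ : forall B, measurable B -> P (phi @^-1` B) = Q B)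
  (f : Y -> R) : measurable_fun setT f -> (exists B, forall y, `|f y| <= B) ->
  (\int[Q]_y (f y)%:E = \int[P]_x (f (phi x))%:E)%E.
Proof.
move=> mf [B hB].
rewrite (eq_measure_integral (pushforward P phi)); last first.
  by move=> A mA _; symmetry; exact: hPQ.
rewrite integral_pushforward //.
- exact/measurable_EFinP.
- rewrite preimage_setT; apply: (@bnd_int _ _ P (f \o phi)).
    exact: measurableT_comp.
  by exists B => x; exact: hB.
Qed.
Definition x0 : nat -> M := fun _ => point.

Lemma hatdist_bound (p q : OmegaHat d) : hatdist p q <= Db + Db.
Proof. by rewrite /hatdist lerD // seqdist_bound. Qed.

Lemma hlip_meas (f : OmegaHat d -> R) : dlipschitz (@hatdist _ _ d) f -> measurable_fun setT f.
Proof. exact: (@lip_meas _ _ _ hatdist_ge0 hat_open_meas f). Qed.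

Lemma hlip_bnd (f : OmegaHat d -> R) : dlipschitz (@hatdist _ _ d) f ->
  exists B, forall x, `|f x| <= B.
Proof. exact: (@lip_bnd _ _ (Db + Db) hatdist_ge0 hatdist_bound (x0, x0) f). Qed.

Lemma hlip_add (f g : OmegaHat d -> R) : dlipschitz (@hatdist _ _ d) f ->
  dlipschitz (@hatdist _ _ d) g -> dlipschitz (@hatdist _ _ d) (fun p => f p + g p).
Proof.
move=> /(@lipP _ _ hatdist_ge0 f) [K1 _ H1] /(@lipP _ _ hatdist_ge0 g) [K2 _ H2].
exists (K1 + K2) => p q.
have : `|f p + g p - (f q + g q)| <= `|f p - f q| + `|g p - g q|.
  by rewrite opprD addrACA ler_normD.
have := H1 p q; have := H2 p q; rewrite mulrDl; lra.
Qed.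

Lemma hlip_fst (g : OmegaM d -> R) : dlipschitz (seqdist d) g ->
  dlipschitz (@hatdist _ _ d) (fun p => g p.1).
Proof.
move=> /(@lipP _ _ seqdist_ge0 g) [K K0 H]; exists K => p q.
by apply: (le_trans (H _ _)); rewrite ler_wpM2l // /hatdist lerDl seqdist_ge0.
Qed.

Lemma hlip_snd (g : OmegaP d -> R) : dlipschitz (seqdist d) g ->
  dlipschitz (@hatdist _ _ d) (fun p => g p.2).
Proof.
move=> /(@lipP _ _ seqdist_ge0 g) [K K0 H]; exists K => p q.
by apply: (le_trans (H _ _)); rewrite ler_wpM2l // /hatdist lerDr seqdist_ge0.
Qed.

Lemma hlip_swap (f : OmegaHat d -> R) : dlipschitz (@hatdist _ _ d) f ->
  dlipschitz (@hatdist _ _ d) (fun p : OmegaHat d => f (p.2, p.1)).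
Proof.
by move=> [K H]; exists K => p q; have := H (p.2, p.1) (q.2, q.1); rewrite /hatdist /= [X in _ -> _ <= K * X]addrC.
Qed.

Lemma sigmaHat_meas : measurable_fun setT (@sigmaHat _ _ d).
Proof.
apply/measurable_fun_pairP; split.
- apply: (@lip_meas_to _ _ _ hatdist_ge0 hat_open_meas); exists 2 => p q /=.
  rewrite /sigmaHat /=.
  apply: (le_trans (seqdist_scons _ _ _ _)).
  have := coord_le p.2 q.2 0; rewrite expr1 => h.
  have := seqdist_ge0 p.1 q.1; have := seqdist_ge0 p.2 q.2; rewrite /hatdist; lra.
- apply: (@lip_meas_to _ _ _ hatdist_ge0 hat_open_meas); exists 2 => p q /=.
  rewrite /sigmaHat /=.
  apply: (le_trans (seqdist_stail _ _)).
  have := seqdist_ge0 p.1 q.1; rewrite /hatdist; lra.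
Qed.

Lemma tri3 (a b c a' b' c' : R) :
  `|(a + b - c) - (a' + b' - c')| <= `|a - a'| + `|b - b'| + `|c - c'|.
Proof.
have -> : (a + b - c) - (a' + b' - c') = (a - a') + (b - b') - (c - c') by ring.
apply: (le_trans (ler_normB _ _)); rewrite lerD2r; exact: ler_normD.
Qed.

Lemma Am_lip (A : OmegaP d -> R) (W : OmegaHat d -> R) (Am : OmegaM d -> R) :
  dlipschitz (seqdist d) A -> dlipschitz (@hatdist _ _ d) W ->
  involution_kernel A W Am -> dlipschitz (seqdist d) Am.
Proof.
move=> /(@lipP _ _ seqdist_ge0 A)[KA KA0 HA] /(@lipP _ _ hatdist_ge0 W)[KW KW0 HW] HK.
exists (2 * KA + 5 * KW) => y y'.
rewrite (HK y x0) (HK y' x0).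
have e1 : seqdist d (scons (y 0%N) x0) (scons (y' 0%N) x0) <= 2 * seqdist d y y'.
  apply: (le_trans (seqdist_scons _ _ _ _)); rewrite seqdist_self addr0.
  by have := coord_le y y' 0; rewrite expr1.
have e2 : @hatdist _ _ d (stail y, scons (y 0%N) x0) (stail y', scons (y' 0%N) x0) <= 4 * seqdist d y y'.
  rewrite /hatdist /=; have := seqdist_stail y y'; move: e1; lra.
have e3 : @hatdist _ _ d (y, x0) (y', x0) = seqdist d y y' by rewrite /hatdist /= seqdist_self addr0.
have h1 := HA (scons (y 0%N) x0) (scons (y' 0%N) x0).
have h2 := HW (stail y, scons (y 0%N) x0) (stail y', scons (y' 0%N) x0).
have h3 := HW (y, x0) (y', x0).
rewrite e3 in h3.
have h1' := le_trans h1 (ler_wpM2l KA0 e1).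
have h2' := le_trans h2 (ler_wpM2l KW0 e2).
apply: (le_trans (tri3 _ _ _ _ _ _)).
have -> : (2 * KA + 5 * KW) * seqdist d y y' = KA * (2 * seqdist d y y') + KW * (4 * seqdist d y y') + KW * seqdist d y y' by ring.
lra.
Qed.
Lemma core (A : OmegaP d -> R) (A_lip : dlipschitz (seqdist d) A)
  (W : OmegaHat d -> R) (W_lip : dlipschitz (@hatdist _ _ d) W)
  (Am : OmegaM d -> R) (W_kernel : involution_kernel A W Am)
  (mu : probability (OmegaP d) R)
  (muh : probability (OmegaHat d) R) (muh_inv : hat_invariant muh)
  (muh_marg : marginalP muh mu)
  (mum : probability (OmegaM d) R) (mum_marg : marginalM muh mum) :
  (\int[mu]_x (A x)%:E = \int[mum]_y (Am y)%:E)%E /\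
  (\int[mu]_x (Am (thetaInv x))%:E = \int[mum]_y (A (theta y))%:E)%E.
Proof.
have Am_l := @Am_lip A W Am A_lip W_lip W_kernel.
have inv : forall f : OmegaHat d -> R, dlipschitz (@hatdist _ _ d) f ->
    (\int[muh]_p (f (sigmaHat p))%:E = \int[muh]_p (f p)%:E)%E.
  move=> f hf; symmetry.
  exact: (@push_int _ _ _ _ muh muh _ sigmaHat_meas muh_inv f (hlip_meas _ hf) (hlip_bnd _ hf)).
have margP : forall g : OmegaP d -> R, dlipschitz (seqdist d) g ->
    (\int[mu]_x (g x)%:E = \int[muh]_p (g p.2)%:E)%E.
  move=> g hg.
  apply: (@push_int _ _ _ _ muh mu _ measurable_snd _ g (@lip_meas _ (OmegaP d) _ seqdist_ge0 open_measP g hg)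
     (@lip_bnd _ _ Db seqdist_ge0 seqdist_bound x0 g hg)).
  move=> B mB.
  have -> : (@snd (OmegaM d) (OmegaP d)) @^-1` B = setT `*` B.
    by apply/seteqP; split => z /=; [move=> h; split|case].
  exact: muh_marg.
have margM : forall g : OmegaM d -> R, dlipschitz (seqdist d) g ->
    (\int[mum]_x (g x)%:E = \int[muh]_p (g p.1)%:E)%E.
  move=> g hg.
  apply: (@push_int _ _ _ _ muh mum _ measurable_fst _ g (@lip_meas _ (OmegaM d) _ seqdist_ge0 open_measP g hg)
     (@lip_bnd _ _ Db seqdist_ge0 seqdist_bound x0 g hg)).
  move=> B mB.
  have -> : (@fst (OmegaM d) (OmegaP d)) @^-1` B = B `*` setT.
    by apply/seteqP; split => z /=; [move=> h; split|case].
  exact: mum_marg.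
have iD : forall f g : OmegaHat d -> R, dlipschitz (@hatdist _ _ d) f ->
    dlipschitz (@hatdist _ _ d) g ->
    (\int[muh]_p (f p + g p)%:E = \int[muh]_p (f p)%:E + \int[muh]_p (g p)%:E)%E.
  move=> f g hf hg.
  exact: (@intD _ _ muh f g (hlip_meas _ hf) (hlip_bnd _ hf) (hlip_meas _ hg) (hlip_bnd _ hg)).
have fin : forall f : OmegaHat d -> R, dlipschitz (@hatdist _ _ d) f ->
    (\int[muh]_p (f p)%:E)%E \is a fin_num.
  move=> f hf; apply: integrable_fin_num => //.
  exact: (@bnd_int _ _ muh f (hlip_meas _ hf) (hlip_bnd _ hf)).
split.
- have key1 : forall p : OmegaHat d, Am (sigmaHat p).1 + W (sigmaHat p) = A p.2 + W p.
    move=> [y x]; rewrite /sigmaHat /= (W_kernel _ (stail x)).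
    have e1 : scons (x 0%N) (stail x) = x by apply/funext => -[|n].
    have e2 : stail (scons (x 0%N) y) = y by apply/funext.
    by rewrite /= e1 e2 subrK.
  rewrite (margP A A_lip) (margM Am Am_l).
  have hH : dlipschitz (@hatdist _ _ d) (fun p => Am p.1 + W p).
    exact: (@hlip_add _ _ (@hlip_fst Am Am_l) W_lip).
  have := inv _ hH.
  under eq_integral do rewrite key1.
  rewrite (iD (fun p => A p.2) W (@hlip_snd A A_lip) W_lip).
  rewrite (iD (fun p => Am p.1) W (@hlip_fst Am Am_l) W_lip) => h.
  by move: h => /(congr1 (fun z => z - \int[muh]_p (W p)%:E)%E); rewrite !addeK ?fin.
- have key2 : forall p : OmegaHat d,
      A (sigmaHat p).1 + W ((sigmaHat p).2, (sigmaHat p).1) = Am p.2 + W (p.2, p.1).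
    move=> [y x]; rewrite /sigmaHat /= (W_kernel x y).
    by rewrite subrK.
  rewrite /thetaInv /theta.
  rewrite (margP Am Am_l) (margM A A_lip).
  have hH : dlipschitz (@hatdist _ _ d) (fun p => A p.1 + W (p.2, p.1)).
    exact: (@hlip_add _ _ (@hlip_fst A A_lip) (@hlip_swap W W_lip)).
  have := inv _ hH.
  under eq_integral do rewrite key2.
  rewrite (iD (fun p => Am p.2) (fun p => W (p.2, p.1)) (@hlip_snd Am Am_l) (@hlip_swap W W_lip)).
  rewrite (iD (fun p => A p.1) (fun p => W (p.2, p.1)) (@hlip_fst A A_lip) (@hlip_swap W W_lip)) => h.
  move: h => /(congr1 (fun z => z - \int[muh]_p (W (p.2, p.1))%:E)%E).
  by rewrite !addeK ?(fin _ (@hlip_swap W W_lip)).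
Qed.
End Basics.

Theorem mainTheorem13 (R : realType) (M : pointedType) (d : M -> M -> R)
  (d_metric : is_metric d) (M_compact : seq_compact d)
  (A : OmegaP d -> R) (A_lip : dlipschitz (seqdist d) A)
  (W : OmegaHat d -> R) (W_lip : dlipschitz (hatdist (d:=d)) W)
  (Am : OmegaM d -> R) (W_kernel : involution_kernel A W Am)
  (mu : probability (OmegaP d) R) (mu_eq : equilibrium mu)
  (muh : probability (OmegaHat d) R) (muh_inv : hat_invariant muh)
  (muh_marg : marginalP muh mu)
  (mum : probability (OmegaM d) R) (mum_marg : marginalM muh mum) :
  (\int[mu]_x (A x)%:E = \int[mum]_y (Am y)%:E)%E /\
  (\int[mu]_x (Am (thetaInv x))%:E = \int[mum]_y (A (theta y))%:E)%E.
Proof.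
have [Db Hb] := @d_bounded R M d d_metric M_compact.
exact: (@core R M d d_metric Db Hb M_compact A A_lip W W_lip Am W_kernel
  mu muh muh_inv muh_marg mum mum_marg).
Qed.
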